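(* If $f,g\in\operatorname{Aut}_{adm}\mathcal M$, then for all $a,b\in\mathbb Z(p)$ with $a\le b<ap^{N_0}$, $$\alpha_{ab0}(fg)=\sum_{c\in\mathbb Z(p)}\alpha_{ac0}(f)\alpha_{cb0}(g),$$ where $fg$ denotes the composition ''first $f$, then $g$'', i.e. $(fg)(x)=g(f(x))$.
   Context: Let $p$ be a prime, $N_0\in\mathbb N$, $k=\mathbb F_{p^{N_0}}$, $K=k((t))$, $\sigma$ Frobenius, $\mathbb Z(p)=\{a\in\mathbb N:p\nmid a\}$. Let $\mathcal M=I(p)^{ab}\otimes\mathbb F_p$, where $I(p)^{ab}$ is the image of the inertia subgroup in the abelianization of the Galois group of the maximal $p$-extension of $K$, and $\mathcal M_k=\mathcal M\otimes_{\mathbb F_p}k$. There is a standard set of free topological generators $\{D_{an}: a\in\mathbb Z(p), n\in\mathbb Z/N_0\mathbb Z\}$ of the $k$-module $\mathcal M_k$ with $(\sigma\otimes\cdot)$-compatibility $D_{an}=(\mathrm{id}\otimes\sigma^n)D_{a0}$ (namely $D_{an}=\sum_r\sigma^n(\alpha_r)\otimes D_a^{(r)}$ for a $\mathbb Z_p$-basis dual pair; concretely, for any $\mathbb F_p$-linear $f$ extended $k$-linearly, $f(D_{a0})=\sum\alpha_{abn}D_{bn}$ implies $f(D_{am})=\sum\sigma^m(\alpha_{abn})D_{b,n+m}$). For a continuous $\mathbb F_p$-linear automorphism $f$ of $\mathcal M$, extended $k$-linearly to $\mathcal M_k$, define $\alpha_{abn}(f)\in k$ by $f(D_{a0})=\sum_{b\in\mathbb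 Z(p),n\in\mathbb Z/N_0}\alpha_{abn}(f)D_{bn}$, with $\alpha_{abn}(f)=0$ if $p\mid a$ or $p\mid b$. $\operatorname{Aut}_{adm}\mathcal M$ is the set of continuous $\mathbb F_p$-linear automorphisms $f$ of $\mathcal M$ such that $\alpha_{a,b,m\bmod N_0}(f)=0$ whenever $a,b\in\mathbb Z(p)$, $-N_0<m\le0$ and $bp^m<a$. *)

(* Defs.v *)
From HB Require Import structures.
From mathcomp Require Import all_boot all_order all_algebra.
Set Implicit Arguments. Unset Strict Implicit. Unset Printing Implicit Defensive.
Import GRing.Theory.
Local Open Scope ring_scope.

Definition Zpr (p : nat) := {a : nat | ~~ (p %| a)%N}.

(* M_k = (completed) free k-module on the D_{an}, a in Z(p), n in Z/N0Z,
   with N0 = N.+1; it is the product  prod_{a,n} k D_{an}  (product topology),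
   so an element is its family of coordinates. *)
Definition Mk (p N : nat) (k : Type) := Zpr p -> 'I_N.+1 -> k.

Section Defs.
Variables (p N : nat) (k : fieldType).

Definition basisD (a : Zpr p) (n : 'I_N.+1) : Mk p N k :=
  fun b m => if (val b == val a) && (m == n) then 1 else 0.

Definition frob (x : k) : k := x ^+ p.

(* id (x) sigma on M_k:  D_{an} |-> D_{a,n+1}, sigma-semilinear *)
Definition phi (x : Mk p N k) : Mk p N k :=
  fun b m => frob (x b (m - inord 1)%R).

Definition klinear (F : Mk p N k -> Mk p N k) :=
  forall (c : k) (x y : Mk p N k),
    F (fun a n => c * x a n + y a n) = fun a n => c * F x a n + F y a n.

(* continuity for the product topology (k finite, discrete): each output
   coordinate depends only on finitely many input coordinates *)
Definition Mcontinuous (F : Mk p N k -> Mk p N k) :=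
  forall (b : Zpr p) (m : 'I_N.+1), exists S : seq (Zpr p * 'I_N.+1),
    forall x y : Mk p N k,
      (forall i, i \in S -> x i.1 i.2 = y i.1 i.2) -> F x b m = F y b m.

(* F is the k-linear extension f (x) id of a continuous F_p-linear
   automorphism f of M = (M_k)^{id (x) sigma} *)
Definition isAutM (F : Mk p N k -> Mk p N k) :=
  [/\ klinear F, Mcontinuous F, (forall x, F (phi x) = phi (F x)) & bijective F].

(* alpha_{abn}(f):  f(D_{a0}) = sum alpha_{abn} D_{bn}; zero if p|a or p|b *)
Definition alpha (F : Mk p N k -> Mk p N k) (a b : nat) (n : 'I_N.+1) : k :=
  match (insub a : option (Zpr p)), (insub b : option (Zpr p)) with
  | Some a', Some b' => F (basisD a' ord0) b' n
  | _, _ => 0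
  end.

(* Aut_adm M : alpha_{a,b,m mod N0} = 0 for -N0 < m <= 0 and b p^m < a;
   written with m = -j, j in {0..N0-1}:  b < a p^j *)
Definition admissible (F : Mk p N k -> Mk p N k) :=
  isAutM F /\
  forall (a b : nat) (j : 'I_N.+1), ~~ (p %| a)%N -> ~~ (p %| b)%N ->
    (b < a * p ^ j)%N -> alpha F a b (- j)%R = 0.

End Defs.

(* Main.v *)
Require Import Defs.
From HB Require Import structures.
From mathcomp Require Import all_boot all_order all_algebra.
From mathcomp Require Import zify.
From Stdlib Require Import Lia FunctionalExtensionality.
Import GRing.Theory.
Local Open Scope ring_scope.

Lemma klin_zero p N (k : fieldType) (G : Mk p N k -> Mk p N k) :
  klinear G -> G (fun _ _ => 0) = fun _ _ => 0.
Proof.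
move=> H; have := H (-1) (fun _ _ => 0) (fun _ _ => 0).
have -> : (fun (_ : Zpr p) (_ : 'I_N.+1) => (-1 : k) * 0 + 0) = fun _ _ => 0.
  by do 2 (apply: functional_extensionality => ?); rewrite mulr0 addr0.
move=> E; apply: functional_extensionality => x; apply: functional_extensionality => x0.
have := congr1 (fun f => f x x0) E => /= ->.
by rewrite mulN1r addNr.
Qed.

Lemma klin_sum p N (k : fieldType) (G : Mk p N k -> Mk p N k) (I : Type)
  (r : seq I) (P : pred I) (w : I -> k) (f : I -> Mk p N k) :
  klinear G ->
  G (fun c n => \sum_(i <- r | P i) w i * f i c n) =
  fun c n => \sum_(i <- r | P i) w i * G (f i) c n.
Proof.
move=> H; elim: r => [|i r IH].
  have -> : (fun (c : Zpr p) (n : 'I_N.+1) => \sum_(i <- [::] | P i) w i * f i c n) = fun _ _ => 0.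
    by do 2 (apply: functional_extensionality => ?); rewrite big_nil.
  rewrite klin_zero //.
  by do 2 (apply: functional_extensionality => ?); rewrite big_nil.
case Pi: (P i).
  have -> : (fun c n => \sum_(j <- i :: r | P j) w j * f j c n) =
     (fun c n => w i * f i c n + \sum_(j <- r | P j) w j * f j c n).
    by do 2 (apply: functional_extensionality => ?); rewrite big_cons Pi.
  rewrite H IH.
  by do 2 (apply: functional_extensionality => ?); rewrite big_cons Pi.
have -> : (fun c n => \sum_(j <- i :: r | P j) w j * f j c n) =
   (fun c n => \sum_(j <- r | P j) w j * f j c n).
  by do 2 (apply: functional_extensionality => ?); rewrite big_cons Pi.
rewrite IH.
by do 2 (apply: functional_extensionality => ?); rewrite big_cons Pi.
Qed.

Lemma basis_phi p N (k : fieldType) (c : Zpr p) (n : 'I_N.+1) :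
  (0 < p)%N -> phi (basisD k c n) = basisD k c (n + inord 1).
Proof.
move=> p0; do 2 (apply: functional_extensionality => ?).
rewrite /phi /basisD /frob subr_eq.
case: ifP => _; first by rewrite expr1n.
by rewrite expr0n eqn0Ngt p0.
Qed.

Lemma G_basis_iter p N (k : fieldType) (G : Mk p N k -> Mk p N k) (c b : Zpr p) :
  (0 < p)%N -> (forall x, G (phi x) = phi (G x)) ->
  forall (j : nat) (m : 'I_N.+1),
  G (basisD k c ((inord 1 : 'I_N.+1) *+ j)) b m =
  iter j (@frob p k) (G (basisD k c 0) b (m - (inord 1 : 'I_N.+1) *+ j)).
Proof.
move=> p0 HG; elim=> [|j IH] m; first by rewrite mulr0n subr0.
rewrite mulrSr -basis_phi // HG /phi IH iterS; congr (@frob p k (iter j _ _)).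
by rewrite opprD addrA [m - _ - _]addrAC.
Qed.

Lemma iter_frob0 p (k : fieldType) j : (0 < p)%N -> iter j (@frob p k) (0 : k) = 0.
Proof. move=> p0; elim: j => //= j ->; by rewrite /frob expr0n eqn0Ngt p0. Qed.
Lemma val_inord1 N : val (inord 1 : 'I_N.+1) = (1 %% N.+1)%N.
Proof. rewrite /inord val_insubd; case: N => [|N] //=. Qed.

Lemma val_mulrn_inord1 N k : val ((inord 1 : 'I_N.+1) *+ k) = (k %% N.+1)%N.
Proof.
elim: k => [|k IH]; first by rewrite mulr0n mod0n.
rewrite mulrS /= IH val_inord1 modnDm. by rewrite add1n.
Qed.

Lemma inord1_mulrn N (n : 'I_N.+1) : (inord 1 : 'I_N.+1) *+ n = n.
Proof. apply: val_inj; rewrite val_mulrn_inord1 modn_small //. Qed.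

Lemma val_oppord N (n : 'I_N.+1) : n != ord0 -> val (- n) = (N.+1 - n)%N.
Proof. move=> Hn /=. rewrite modn_small //.
 have : (0 < n)%N by rewrite lt0n; apply: contra Hn => /eqP H; apply/eqP/val_inj.
 move: (ltn_ord n); lia. Qed.

Theorem proposition2p2 (p N : nat) (k : finFieldType)
    (F G : Mk p N k -> Mk p N k) :
  prime p -> p \in [pchar k] -> #|k| = (p ^ N.+1)%N ->
  admissible F -> admissible G ->
  forall a b : nat, ~~ (p %| a)%N -> ~~ (p %| b)%N ->
    (a <= b)%N -> (b < a * p ^ N.+1)%N ->
    exists n0 : nat,
      (forall c : nat, (n0 <= c)%N -> alpha F a c ord0 * alpha G c b ord0 = 0) /\
      alpha (G \o F) a b ord0 =
        \sum_(c < n0 | ~~ (p %| c)%N) alpha F a c ord0 * alpha G c b ord0.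
Proof.
move=> pr _ _ [[FlinF FcontF FphiF _] FadmF] [[GlinG GcontG GphiG _] GadmG]
  a b Ha Hb hab hb.
have p0 : (0 < p)%N := prime_gt0 pr.
have E0 : (- ord0 : 'I_N.+1) = ord0 by apply: val_inj; rewrite /= subn0 modnn.
have Hia : (insub a : option (Zpr p)) = Some (Sub a Ha) :=
  (@insubT _ _ (Zpr p) a Ha).
have Hib : (insub b : option (Zpr p)) = Some (Sub b Hb) :=
  (@insubT _ _ (Zpr p) b Hb).
set a' : Zpr p := Sub a Ha.
set b' : Zpr p := Sub b Hb.
exists b.+1; split.
  move=> c Hc; case Hpc: (p %| c)%N.
    have Hn : (insub c : option (Zpr p)) = None by apply: insubN; rewrite negbK Hpc.
    by rewrite /alpha Hn; case: (insub a) => [?|]; rewrite mul0r.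
  have := GadmG c b ord0 (negbT Hpc) Hb; rewrite expn0 muln1 E0 => -> //.
  by rewrite mulr0.
have HvK : forall c : Zpr p, (insub (val c) : option (Zpr p)) = Some c := valK.
have ->: alpha (G \o F) a b ord0 = G (F (basisD k a' ord0)) b' ord0.
  by rewrite /alpha Hia Hib.
set x := F (basisD k a' ord0).
have Hx : forall c n, x c n = alpha F a (val c) n by move=> c n; rewrite /alpha Hia HvK.
pose D0 (c : Zpr p) (n : 'I_N.+1) := (n == ord0) && (val c <= b)%N.
pose x0 := fun c n => if D0 c n then x c n else 0.
pose y := fun c n => if D0 c n then 0 else x c n.
have Hsplit : x = fun c n => 1 * x0 c n + y c n.
  apply: functional_extensionality => c; apply: functional_extensionality => n.
  by rewrite mul1r /x0 /y; case: (D0 c n); rewrite ?addr0 ?add0r.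
rewrite Hsplit GlinG mul1r.
have Hy : G y b' ord0 = 0.
  have [S HS] := GcontG b' ord0.
  pose y' := fun c n => \sum_(i <- undup S | xpredT i) y i.1 i.2 * basisD k i.1 i.2 c n.
  rewrite (HS y y'); last first.
    move=> [c n] /= Hi; rewrite /y' (bigD1_seq (c, n)) /= ?mem_undup ?undup_uniq //.
    rewrite /basisD !eqxx /= mulr1 big1 ?addr0 // => i Hne.
    case: ifP; last by rewrite mulr0.
    case/andP => /eqP Hc /eqP Hn; exfalso; move: Hne; case: i Hc Hn => c' n' /= Hc ->.
    by rewrite (val_inj Hc) eqxx.
  have -> : G y' = fun c n => \sum_(i <- undup S | xpredT i)
                  y i.1 i.2 * G (basisD k i.1 i.2) c n by apply: klin_sum.
  rewrite big1 // => [[c n]] _ /=.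
  rewrite /y; case HD: (D0 c n); first by rewrite mul0r.
  case Hn: (n == ord0).
    move/eqP: Hn => Hn; move: HD; rewrite Hn /D0 eqxx /= => /negbT; rewrite -ltnNge => Hcb.
    have -> : G (basisD k c ord0) b' ord0 = alpha G (val c) b ord0 by rewrite /alpha HvK Hib.
    by rewrite -E0 GadmG ?mulr0 ?expn0 ?muln1 // (valP c).
  case: (ltnP (val c) (a * p ^ (val (- n)))) => H1.
    by rewrite Hx -(opprK n) FadmF ?mul0r // (valP c).
  case: (ltnP b (val c * p ^ n)) => H2.
    have Hn' := @inord1_mulrn N n.
    rewrite (_ : basisD k c n = basisD k c ((inord 1 : 'I_N.+1) *+ n)); last by rewrite Hn'.
    rewrite G_basis_iter // sub0r Hn'.
    have -> : G (basisD k c 0) b' (- n) = alpha G (val c) b (- n) by rewrite /alpha HvK Hib.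
    by rewrite GadmG ?iter_frob0 ?mulr0 // (valP c).
  exfalso; move: H1; rewrite val_oppord ?Hn // => H1.
  have := leq_mul H1 (leqnn (p ^ n)); rewrite -mulnA -expnD subnK; last first.
    exact: ltnW (ltn_ord n).
  move=> H3; have := leq_trans H3 H2; by rewrite leqNgt hb.
rewrite Hy addr0.
pose w (c : nat) : k := match (insub c : option (Zpr p)) with Some c' => x c' ord0 | None => 0 end.
pose f (c : nat) : Mk p N k := match (insub c : option (Zpr p)) with
  Some c' => basisD k c' ord0 | None => fun _ _ => 0 end.
have Hx0 : x0 = fun cc m => \sum_(c < b.+1 | ~~ (p %| c)%N) w c * f c cc m.
  apply: functional_extensionality => cc; apply: functional_extensionality => m.
  rewrite /x0 /D0; case: ifP => [/andP[/eqP -> Hcb] | Hno].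
    have Hcb' : (val cc < b.+1)%N by rewrite ltnS.
    rewrite (bigD1 (Ordinal Hcb')) /=; last exact: (valP cc).
    rewrite /w /f HvK /basisD !eqxx /= mulr1 big1 ?addr0 // => i /andP[_ Hne].
    case: insubP => [c' _ Hc'|_]; last by rewrite mul0r.
    rewrite Hc'; case: ifP; last by rewrite mulr0.
    case/andP => /eqP E _; exfalso; move/negP: Hne; apply; apply/eqP/val_inj => /=.
    by rewrite E.
  rewrite big1 // => i _.
  rewrite /w /f; case: insubP => [c' _ Hc'|_]; last by rewrite mul0r.
  rewrite /basisD; case: ifP; last by rewrite mulr0.
  case/andP => /eqP E /eqP Em; exfalso; move: Hno; rewrite Em eqxx /= E Hc'.
  by rewrite -ltnS ltn_ord.
have -> : G x0 = fun cc m => \sum_(c < b.+1 | ~~ (p %| c)%N) w c * G (f c) cc m.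
  by rewrite Hx0; apply: klin_sum.
apply: eq_bigr => c _.
rewrite /w /f /alpha Hia Hib.
case: (insub (c : nat)) => [c'|] //.
by rewrite !mul0r.
Qed.
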